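(* Let $(X,p)$ be a metric space, $(Y,d)$ a complete separable metric space, and $F: X \Rightarrow Y$ a multi-valued function. Let $\overline{F}: X \Rightarrow Y$ be given by $\overline{F}(x) = $ the closure of $F(x)$, viewed also as a map $X \to \mathcal{F}(Y)$. Then: (1) $F$ is strongly continuous at $x\in X$ if and only if $\overline F$ is strongly continuous at $x$, if and only if $\overline F: X \to \mathcal{F}(Y)$ is continuous at $x$ with respect to the lower Fell topology on $\mathcal{F}(Y)$. In particular, if $\overline F: X \to \mathcal{F}(Y)$ is continuous at $x$ with respect to the Fell topology, then $F$ is strongly continuous at $x$. (2) Let $\mathcal{T}$ be a Polish topology on $\mathcal{F}(Y)$ whose Borel sets are exactly the sets of the Effros Borel $\sigma$-algebra. If $F$ is strongly continuous at every $x \in X$, then $\overline F: X \to (\mathcal{F}(Y),\mathcal{T})$ is Borel measurable (with $X$ carrying its Borel $\sigma$-algebra). (3) If the graph of $F$ is a closed subset of $X \times Y$ and $F$ is strongly continuous at $x \in X$, then $F: X \to \mathcal{F}(Y)$ is continuous at $x$ with respect to the Fell topology. (4) If the graph of $F$ is a closed subset of $X\times Y$, then $F$ is strongly continuous at $x \in X$ if and only if $F: X\to\mathcal{F}(Y)$ is continuous at $x$ with respect to the Fell topology.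
   Context: A multi-valued function $F: X \Rightarrow Y$ assigns to each $x$ a nonempty set $F(x)\subseteq Y$; its graph is $\{(x,y): y\in F(x)\}$. $F$ is strongly continuous at $x$ if for every $y \in F(x)$ and every $\varepsilon>0$ there is $\delta>0$ such that for every $x' \in B_p(x,\delta)$ there is $y' \in F(x')$ with $d(y,y')<\varepsilon$. $\mathcal{F}(Y)$ is the family of closed subsets of $Y$. The lower Fell topology on $\mathcal{F}(Y)$ is generated by the sets $\mathcal{A}_U = \{C \in \mathcal{F}(Y): C\cap U \neq\emptyset\}$ for $U\subseteq Y$ open; the Effros Borel $\sigma$-algebra is the $\sigma$-algebra generated by these sets $\mathcal{A}_U$. The Fell topology has as basis the sets $\{C\in\mathcal{F}(Y): C\cap K=\emptyset \text{ and } C\cap U_i\neq\emptyset \text{ for all } i\le n\}$ with $K\subseteq Y$ compact and $U_1,\dots,U_n\subseteq Y$ open. *)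

(* Defs.v *)
From HB Require Import structures.
From mathcomp Require Import all_boot all_order all_algebra.
From mathcomp Require Import all_classical all_reals.
From mathcomp Require Import topology normedtype measure.
Set Implicit Arguments. Unset Strict Implicit. Unset Printing Implicit Defensive.
Import Order.TTheory GRing.Theory Num.Theory.
Local Open Scope classical_set_scope.
Local Open Scope ring_scope.

Definition separable_space (T : topologicalType) : Prop :=
  exists D : set T, countable D /\ dense D.

Definition strongly_continuous_at {R : realType} {X Y : pseudoMetricType R}
  (F : X -> set Y) (x : X) : Prop :=
  forall y, F x y -> forall eps : R, 0 < eps ->
    exists2 delta : R, 0 < delta &
      forall x', ball x delta x' -> exists2 y', F x' y' & ball y eps y'.

Definition closedsets (Y : topologicalType) := {C : set Y | closed C}.

Definition Fbar {X Y : topologicalType} (F : X -> set Y) (x : X)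
  : closedsets Y := exist _ (closure (F x)) (@closed_closure Y (F x)).

Definition is_topology (T : Type) (tau : set (set T)) : Prop :=
  [/\ tau setT, tau set0,
      (forall A B, tau A -> tau B -> tau (A `&` B)) &
      (forall (I : Type) (f : I -> set T), (forall i, tau (f i)) ->
         tau (\bigcup_(i in [set: I]) f i))].

Definition generated_topology (T : Type) (S : set (set T)) : set (set T) :=
  fun O => forall tau, is_topology tau -> S `<=` tau -> tau O.

Definition hit (Y : topologicalType) (U : set Y) : set (closedsets Y) :=
  [set C | proj1_sig C `&` U !=set0].

Definition lower_fell (Y : topologicalType) : set (set (closedsets Y)) :=
  generated_topology [set hit U | U in [set U : set Y | open U]].

Definition fell_basis (Y : topologicalType) : set (set (closedsets Y)) :=
  [set B | exists (K : set Y) (n : nat) (U : nat -> set Y),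
      [/\ compact K, (forall i, (i < n)%N -> open (U i)) &
          B = [set C | proj1_sig C `&` K = set0 /\
                       forall i, (i < n)%N -> proj1_sig C `&` U i !=set0]]].

Definition fell (Y : topologicalType) : set (set (closedsets Y)) :=
  generated_topology (@fell_basis Y).

Definition effros (Y : topologicalType) : set (set (closedsets Y)) :=
  <<s [set hit U | U in [set U : set Y | open U]] >>.

Definition continuous_at_wrt {X : topologicalType} {T : Type}
  (tau : set (set T)) (G : X -> T) (x : X) : Prop :=
  forall O, tau O -> O (G x) -> nbhs x (G @^-1` O).

Definition is_metric {R : realType} (T : Type) (d : T -> T -> R) : Prop :=
  [/\ forall a b, 0 <= d a b,
      forall a b, d a b = 0 <-> a = b,
      forall a b, d a b = d b a &
      forall a b c, d a c <= d a b + d b c].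

Definition metric_open {R : realType} (T : Type) (d : T -> T -> R) : set (set T) :=
  [set O | forall a, O a -> exists2 e : R, 0 < e & forall b, d a b < e -> O b].

Definition metric_complete {R : realType} (T : Type) (d : T -> T -> R) : Prop :=
  forall u : nat -> T,
    (forall e : R, 0 < e -> exists N, forall m n, (N <= m)%N -> (N <= n)%N ->
        d (u m) (u n) < e) ->
    exists l, forall e : R, 0 < e -> exists N, forall n, (N <= n)%N -> d (u n) l < e.

Definition metric_separable {R : realType} (T : Type) (d : T -> T -> R) : Prop :=
  exists D : set T, countable D /\
    forall a (e : R), 0 < e -> exists2 b, D b & d a b < e.

Definition polish_topology (R : realType) (T : Type) (tau : set (set T)) : Prop :=
  exists d : T -> T -> R, [/\ is_metric d, metric_complete d,
    metric_separable d & tau = metric_open d].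

Definition borel_measurable_into {X : topologicalType} {T : Type}
  (S : set (set T)) (G : X -> T) : Prop :=
  forall B, S B -> <<s [set O : set X | open O] >> (G @^-1` B).

Definition graph {X Y : Type} (F : X -> set Y) : set (X * Y) :=
  [set z | F z.1 z.2].

(* Main.v *)
Require Import Defs.
From HB Require Import structures.
From mathcomp Require Import all_boot all_order all_algebra.
From mathcomp Require Import all_classical all_reals.
From mathcomp Require Import topology normedtype measure.
Import Order.TTheory GRing.Theory Num.Theory.
Local Open Scope classical_set_scope.
Local Open Scope ring_scope.

Lemma cont_gen {X : topologicalType} {T : Type} (S : set (set T)) (G : X -> T) x :
  (forall O, S O -> O (G x) -> nbhs x (G @^-1` O)) ->
  continuous_at_wrt (generated_topology S) G x.
Proof.
move=> h O hO; apply: (hO [set O | O (G x) -> nbhs x (G @^-1` O)]) => //; split.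
- by move=> _; exact: filterT.
- by [].
- move=> A B hA hB [/hA nA /hB nB]; exact: filterI.
- move=> I f hf [i _ fi]; apply: filterS (hf i fi) => z fz; by exists i.
Qed.

Lemma tube (X Y : topologicalType) (F : X -> set Y) (K : set Y) (x : X) :
  closed (graph F) -> compact K -> closure (F x) `&` K = set0 ->
  \forall x' \near x, closure (F x') `&` K = set0.
Proof.
move=> cG cK h0.
have := (compact_near_coveringP K).1 cK X (nbhs x)
  (fun x' y => ~ closure (F x') y) _.
move=> /(_ _) H.
have {}H : \forall x' \near x, K `<=` (fun y => ~ closure (F x') y).
  apply: H => y Ky.
  have nF : ~ F x y.
    move=> Fxy; have : (closure (F x) `&` K) y by split => //; exact: subset_closure.
    by rewrite h0.
  have : nbhs (x, y) (~` graph F) by apply: (closed_openC cG).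
  move=> [[V W] /= [hV hW] hVW].
  idtac.
  exists (W°, V) => //=; first by split => //; exact: nbhs_interior.
  move=> [b a] [/= Wb Va] cl.
  have [z [Fz Wz]] := cl W Wb.
  by apply: (hVW (a, z)).
apply: filterS H => x' Hx'; apply/seteqP; split => // y [c k].
by apply: (Hx' y k).
Qed.

Section SC.
Context {R : realType} {X Y : pseudoMetricType R}.
Variable F : X -> set Y.

Lemma sc_closure x : strongly_continuous_at F x ->
  strongly_continuous_at (fun x' => closure (F x')) x.
Proof.
move=> h y cy e e0.
have e20 : 0 < e / 2 by rewrite divr_gt0.
have [z [Fz bz]] := cy _ (nbhsx_ballx y _ e20).
have [d d0 hd] := h z Fz _ e20.
exists d => // x' bx; have [y' Fy' by'] := hd x' bx.
exists y'; first exact: subset_closure.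
exact: ball_split bz by'.
Qed.

Lemma sc_unclosure x : strongly_continuous_at (fun x' => closure (F x')) x ->
  strongly_continuous_at F x.
Proof.
move=> h y Fy e e0.
have e20 : 0 < e / 2 by rewrite divr_gt0.
have [d d0 hd] := h y (subset_closure Fy) _ e20.
exists d => // x' bx; have [y' cy' by'] := hd x' bx.
have [z [Fz bz]] := cy' _ (nbhsx_ballx y' _ e20).
by exists z => //; exact: ball_split by' bz.
Qed.

Lemma sc_lower x U : strongly_continuous_at (fun x' => closure (F x')) x ->
  open U -> closure (F x) `&` U !=set0 ->
  nbhs x [set x' | closure (F x') `&` U !=set0].
Proof.
move=> h oU [y [cy Uy]].
have /nbhs_ballP [e e0 hU] : nbhs y U by exact: open_nbhs_nbhs.
have [d d0 hd] := h y cy e e0.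
apply/nbhs_ballP; exists d => // x' bx.
have [y' cy' by'] := hd x' bx.
by exists y'; split => //; exact: hU.
Qed.

Lemma sc_lower_fell x : strongly_continuous_at (fun x' => closure (F x')) x ->
  continuous_at_wrt (@lower_fell Y) (Fbar F) x.
Proof.
move=> h; apply: cont_gen => O [U oU <-] hx.
exact: sc_lower.
Qed.
End SC.

Section SC2.
Context {R : realType} {X Y : pseudoMetricType R}.
Variable F : X -> set Y.

Lemma lower_fell_sc x : continuous_at_wrt (@lower_fell Y) (Fbar F) x ->
  strongly_continuous_at (fun x' => closure (F x')) x.
Proof.
move=> h y cy e e0.
have hO : lower_fell (hit (ball y e)°).
  move=> tau _ sub; apply: sub; exists (ball y e)° => //; exact: open_interior.
have hx : hit (ball y e)° (Fbar F x).
  by exists y; split => //; exact: nbhsx_ballx.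
have /nbhs_ballP [d d0 hd] := h _ hO hx.
exists d => // x' bx; have [y' [cy' iy']] := hd x' bx.
by exists y' => //; exact: interior_subset.
Qed.

Lemma lower_sub_fell O : lower_fell O -> @fell Y O.
Proof.
move=> hO tau ht sub; apply: hO => // _ [U oU <-]; apply: sub.
exists set0, 1%N, (fun=> U); split.
- exact: compact0.
- by move=> i _.
- apply/seteqP; split => C /=.
    by move=> hC; split; [rewrite setI0|move=> i _; exact: hC].
  by move=> [_ hC]; exact: (hC 0%N).
Qed.

Lemma fell_sc x : continuous_at_wrt (@fell Y) (Fbar F) x ->
  strongly_continuous_at F x.
Proof.
move=> hf; apply: sc_unclosure; apply: lower_fell_sc => O hO.
by apply: hf; exact: lower_sub_fell.
Qed.

Lemma near_all_lt {T : topologicalType} (x : T) (n : nat) (P : nat -> T -> Prop) :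
  (forall i, (i < n)%N -> \forall y \near x, P i y) ->
  \forall y \near x, forall i, (i < n)%N -> P i y.
Proof.
have FF : Filter (nbhs x) by apply: nbhs_filter.
elim: n => [|n IH] h.
  by apply: filterS filterT => y _ i; rewrite ltn0.
have H := filterI (IH (fun i hi => h i (ltnW hi))) (h n (ltnSn n)).
move: H => /(_ FF) H.
apply: filterS H => y [a b] i; rewrite ltnS leq_eqVlt => /orP [/eqP ->|/a] //.
Qed.

Lemma fell_cont x : closed (graph F) -> strongly_continuous_at F x ->
  continuous_at_wrt (@fell Y) (Fbar F) x.
Proof.
move=> cG /sc_closure hx; apply: cont_gen => O [K [n [U [cK oU ->]]]] [/= hK hU].
have h1 := @tube _ _ F K x cG cK hK.
have h2 : \forall x' \near x, forall i, (i < n)%N -> closure (F x') `&` U i !=set0.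
  apply: near_all_lt => i hi; exact: sc_lower (oU i hi) (hU i hi).
by apply: filterS (filterI h1 h2) => x' [a b]; split.
Qed.

Lemma meas (tau : set (set (closedsets Y))) :
  <<s tau >> = @effros Y -> (forall x, strongly_continuous_at F x) ->
  borel_measurable_into (<<s tau >>) (Fbar F).
Proof.
move=> -> hsc B hB.
have [s0 sC sU] := @smallest_sigma_algebra X setT [set O : set X | open O].
have sig : sigma_algebra setT [set B | <<s [set O : set X | open O] >> (Fbar F @^-1` B)].
  split => /=.
  - by rewrite preimage_set0.
  - by move=> A hA; rewrite setTD preimage_setC -setTD; exact: sC.
  - by move=> A hA; rewrite preimage_bigcup; exact: sU.
apply: (smallest_sub sig _ hB) => _ [U oU <-].
apply: sub_sigma_algebra; rewrite /= openE => x hx.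
exact: (sc_lower F x U (sc_closure F x (hsc x)) oU hx).
Qed.
End SC2.

Theorem proposition3p3 (R : realType) (X : pseudoMetricType R)
  (Y : completePseudoMetricType R)
  (hX : hausdorff_space X) (hY : hausdorff_space Y)
  (sepY : separable_space Y)
  (F : X -> set Y) (hF : forall x, F x !=set0) :
  (* (1) *)
  (forall x : X,
     (strongly_continuous_at F x <->
        strongly_continuous_at (fun x' => closure (F x')) x) /\
     (strongly_continuous_at (fun x' => closure (F x')) x <->
        continuous_at_wrt (@lower_fell Y) (Fbar F) x) /\
     (continuous_at_wrt (@fell Y) (Fbar F) x -> strongly_continuous_at F x)) /\
  (* (2) *)
  (forall tau : set (set (closedsets Y)),
     polish_topology R tau -> <<s tau >> = @effros Y ->
     (forall x, strongly_continuous_at F x) ->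
     borel_measurable_into (<<s tau >>) (Fbar F)) /\
  (* (3) *)
  (closed (graph F) -> forall x : X,
     strongly_continuous_at F x -> continuous_at_wrt (@fell Y) (Fbar F) x) /\
  (* (4) *)
  (closed (graph F) -> forall x : X,
     strongly_continuous_at F x <-> continuous_at_wrt (@fell Y) (Fbar F) x).
Proof.
split.
  move=> x; split; first by split; [exact: sc_closure|exact: sc_unclosure].
  split; first by split; [exact: sc_lower_fell|exact: lower_fell_sc].
  exact: fell_sc.
split.
  by move=> tau _ htau hsc; exact: meas.
split.
  by move=> cG x hx; exact: fell_cont.
by move=> cG x; split; [exact: fell_cont|exact: fell_sc].
Qed.
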